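(* Let $\eta$ be a probability measure on $\Theta$ equivalent to $\mu$, $\alpha\in(0,1]$, and let $(R^*_\theta,p^*_\theta)_{\theta\in\Theta}$ be an incentive efficient menu optimal for problem (W). Suppose the premia satisfy, for every $\theta$, $$p^*_\theta=\int_0^{\bar L}\big[1-g_{\underline\theta}(F_{\underline\theta}(l))\big]dl-\int_{\underline\theta}^{\theta}\int_0^{\bar L}\Big[\frac{\partial g_s}{\partial s}(F_s(l))+g_s'(F_s(l))\frac{\partial F_s(l)}{\partial s}\Big]\frac{\partial R^*_s(l)}{\partial l}dl\,ds-\int_0^{\bar L}\big[1-g_\theta(F_\theta(l))\big]\frac{\partial R^*_\theta(l)}{\partial l}dl.$$ Then: (1) if $\frac{\partial R^*_\theta(l)}{\partial l}\equiv0$, then $\int_\Theta\int_0^{\bar L}g^{In}(F_\theta(l))\,dl\,d\mu\ge\int_0^{\bar L}g_{\underline\theta}(F_{\underline\theta}(l))\,dl$; (2) if $\frac{\partial R^*_\theta(l)}{\partial l}\equiv1$, then $V_\theta(R^*_\theta,p^*_\theta)=0$ for all $\theta\in\Theta$; (3) if $\frac{\partial R^*_\theta(l)}{\partial l}$ takes values in $(0,1)$, then $$\int_\Theta\int_0^{\bar L}g^{In}(F_\theta(l))\,dl\,d\mu\ge\int_0^{\bar L}g_{\underline\theta}(F_{\underline\theta}(l))dl+\int_\Theta U_\theta(R^*_\theta,p^*_\theta)d\mu-U_{\underline\theta}(R^*_{\underline\theta},p^*_{\underline\theta})+\int_\Theta\int_0^{\bar L}\big[g^{In}(F_\theta(l))-g_\theta(F_\theta(l))\big]\frac{\partial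 R^*_\theta(l)}{\partial l}dl\,d\mu.$$ Moreover, if $p^*_\theta=0$ and $R^*_\theta=0$ for each $\theta\in\Theta$, then $g^{In}(F_\theta(l))=1$ for almost every $\theta\in\Theta$ and almost every $l\in[0,\bar L]$.
   Context: Setting (Yaari dual-utility insurance model). $(S,\Sigma,\mathbb P)$ is a probability space. Types: $\Theta=[\underline\theta,\bar\theta]$ with Borel $\sigma$-algebra and a probability measure $\mu$ with a Lebesgue density $q$. Fix $\bar L<\infty$. For each $\theta$ the type-$\theta$ agent faces a loss $L_\theta$ (bounded, $\Sigma$-measurable, values in $[0,\bar L]$) with continuous distribution function $F_\theta(l)=\mathbb P(L_\theta\le l)$. Retention functions: $\mathcal R=\{R:[0,\bar L]\to[0,\bar L]: R(0)=0,\ 0\le\partial R(l)/\partial l\le1\}$. A menu is a family $(R_\theta,p_\theta)_{\theta\in\Theta}$ with $R_\theta\in\mathcal R$, $p_\theta\in\mathbb R$. A distortion function is a nondecreasing $g:[0,1]\to[0,1]$ with $g(0)=0,g(1)=1$; type $\theta$ has distortion $g_\theta$ (with $g'_\theta$ the derivative in $t$), the insurer $g^{In}$. Utilities: $U_\theta(R,p)=-p-\int_0^{\bar L}[1-g_\theta(F_\theta(l))]\frac{\partial R(l)}{\partial l}dl$, $V_\theta(R,p)=p-\int_0^{\bar L}[1-g^{In}(F_\theta(l))](1-\frac{\partial R(l)}{\partial l})dl$, no-insurance utility $U_\theta(L_\theta,0)=-\int_0^{\bar L}[1-g_\theta(F_\theta(l))]dl$. Throughout, for every menu $\theta\mapsto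 U_\theta(R_\theta,p_\theta)$, $\theta\mapsto V_\theta(R_\theta,p_\theta)$ lie in $L^1(\Theta,\mu)$. Individually rational (IR): $U_\theta(R_\theta,p_\theta)\ge U_\theta(L_\theta,0)$ for all $\theta$ and $\int_\Theta V_\theta(R_\theta,p_\theta)d\mu\ge0$. Incentive compatible (IC): $U_\theta(R_\theta,p_\theta)\ge U_\theta(R_{\theta'},p_{\theta'})$ for all $\theta,\theta'$. Incentive efficient: an IR and IC menu $(R^*,p^* )$ such that no IR and IC menu $(R,p)$ has $U_\theta(R_\theta,p_\theta)\ge U_\theta(R^*_\theta,p^*_\theta)$ $\mu$-a.e. and $\int V_\theta(R_\theta,p_\theta)d\mu\ge\int V_\theta(R^*_\theta,p^*_\theta)d\mu$ with strict inequality in the latter or strict inequality in the former on a set of positive $\mu$-measure. Problem (W): $\sup\{\alpha\int_\Theta U_\theta(R_\theta,p_\theta)d\eta+(1-\alpha)\int_\Theta V_\theta(R_\theta,p_\theta)d\mu\}$ over IR and IC menus. Standing assumptions: (A1) $g^{In}(t)\ge g_\theta(t)$ for all $t,\theta$. (A2) $\theta\mapsto F_\theta(l)$ differentiable, $\{F_\theta\}$ uniformly Lipschitz in $\theta$, $\partial F_\theta(l)/\partial\theta\le0$ for all $l$. (A3) each $g_\theta$ differentiable with $g'_\theta\le\delta$ for a common $\delta<\infty$; $\theta\mapsto g_\theta(t)$ differentiable, uniformly Lipschitz in $\theta$; $\partial g_\theta(t)/\partial\theta\le0$ for $t\in(0,1)$. The conditions ''$\frac{\partial R^*_\theta(l)}{\partial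 l}\equiv0$'' etc. refer to all $\theta\in\Theta$ and $l\in[0,\bar L]$. *)

(* Defs.v *)
From HB Require Import structures.
From mathcomp Require Import all_boot all_order all_algebra.
From mathcomp Require Import all_classical all_reals all_analysis.
Set Implicit Arguments. Unset Strict Implicit. Unset Printing Implicit Defensive.
Import Order.TTheory GRing.Theory Num.Theory.
Import numFieldNormedType.Exports.
Local Open Scope classical_set_scope.
Local Open Scope ring_scope.

Section Yaari.
Context (R : realType).

Definition intL (Lb : R) (f : R -> R) : R :=
  Rintegral (@lebesgue_measure R) `[0, Lb] f.

Definition Fdist d (T : measurableType d) (P : probability T R)
  (L : R -> T -> R) (theta l : R) : R :=
  fine (P [set w | L theta w <= l]).

Definition retention (Lb : R) (Rf : R -> R) : Prop :=
  Rf 0 = 0 /\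
  (forall l, 0 <= l <= Lb -> 0 <= Rf l <= Lb) /\
  (forall l, 0 <= l <= Lb -> derivable Rf l 1 /\ 0 <= derive1 Rf l <= 1).

Definition distortion (g : R -> R) : Prop :=
  g 0 = 0 /\ g 1 = 1 /\ (forall t, 0 <= t <= 1 -> 0 <= g t <= 1) /\
  (forall s t, 0 <= s -> s <= t -> t <= 1 -> g s <= g t).

Definition Uag (Lb : R) (g : R -> R -> R) (F : R -> R -> R)
  (theta : R) (Rf : R -> R) (p : R) : R :=
  - p - intL Lb (fun l => (1 - g theta (F theta l)) * derive1 Rf l).

Definition Vins (Lb : R) (gIn : R -> R) (F : R -> R -> R)
  (theta : R) (Rf : R -> R) (p : R) : R :=
  p - intL Lb (fun l => (1 - gIn (F theta l)) * (1 - derive1 Rf l)).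

(* no-insurance utility U_theta(L_theta, 0) *)
Definition Unone (Lb : R) (g : R -> R -> R) (F : R -> R -> R) (theta : R) : R :=
  - intL Lb (fun l => 1 - g theta (F theta l)).

Section Menus.
Variables (tl th Lb : R) (mu : {measure set R -> \bar R})
  (g : R -> R -> R) (gIn : R -> R) (F : R -> R -> R).

Definition Theta : set R := `[tl, th].

Definition menu (Rm : R -> R -> R) (pm : R -> R) : Prop :=
  (forall theta, Theta theta -> retention Lb (Rm theta)) /\
  mu.-integrable Theta (fun theta => (Uag Lb g F theta (Rm theta) (pm theta))%:E) /\
  mu.-integrable Theta (fun theta => (Vins Lb gIn F theta (Rm theta) (pm theta))%:E).

Definition IR (Rm : R -> R -> R) (pm : R -> R) : Prop :=
  (forall theta, Theta theta ->
     Uag Lb g F theta (Rm theta) (pm theta) >= Unone Lb g F theta) /\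
  (\int[mu]_(theta in Theta) (Vins Lb gIn F theta (Rm theta) (pm theta))%:E >= 0)%E.

Definition IC (Rm : R -> R -> R) (pm : R -> R) : Prop :=
  forall theta theta', Theta theta -> Theta theta' ->
    Uag Lb g F theta (Rm theta) (pm theta) >= Uag Lb g F theta (Rm theta') (pm theta').

Definition feasible Rm pm := menu Rm pm /\ IR Rm pm /\ IC Rm pm.

Definition totV Rm pm : \bar R :=
  \int[mu]_(theta in Theta) (Vins Lb gIn F theta (Rm theta) (pm theta))%:E.

Definition incentive_efficient (Rs : R -> R -> R) (ps : R -> R) : Prop :=
  feasible Rs ps /\
  ~ (exists Rm pm, feasible Rm pm /\
      {ae mu, forall theta, Theta theta ->
         (Uag Lb g F theta (Rm theta) (pm theta) >= Uag Lb g F theta (Rs theta) (ps theta))%R} /\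
      (totV Rm pm >= totV Rs ps)%E /\
      ((totV Rm pm > totV Rs ps)%E \/
       (0 < mu [set theta | Theta theta /\
          (Uag Lb g F theta (Rm theta) (pm theta) > Uag Lb g F theta (Rs theta) (ps theta))%R])%E)).

Definition Wobj (eta : {measure set R -> \bar R}) (alpha : R) Rm pm : \bar R :=
  (alpha%:E * \int[eta]_(theta in Theta) (Uag Lb g F theta (Rm theta) (pm theta))%:E
   + (1 - alpha)%:E * totV Rm pm)%E.

Definition optimal_W (eta : {measure set R -> \bar R}) (alpha : R) Rs ps : Prop :=
  feasible Rs ps /\
  forall Rm pm, feasible Rm pm -> (Wobj eta alpha Rm pm <= Wobj eta alpha Rs ps)%E.

End Menus.
End Yaari.

(* Main.v *)
Require Import Defs.
From HB Require Import structures.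
From mathcomp Require Import all_boot all_order all_algebra.
From mathcomp Require Import all_classical all_reals all_analysis.
From mathcomp Require Import ring lra measurable_realfun.
Import Order.TTheory GRing.Theory Num.Theory.
Import numFieldNormedType.Exports.
Local Open Scope classical_set_scope.
Local Open Scope ring_scope.
Section Helpers.
Context {R : realType}.

Definition clamp (a b x : R) := if x < a then a else if b < x then b else x.

Lemma clamp_in a b x : a <= b -> a <= clamp a b x <= b.
Proof.
rewrite /clamp => ab; case: ltP => xa; first by rewrite lexx ab.
case: ltP => bx; first by rewrite ab lexx.
by rewrite xa bx.
Qed.

Lemma clamp_id a b x : a <= x <= b -> clamp a b x = x.
Proof.
rewrite /clamp => /andP[ax xb]; case: ltP => xa; first lra.
case: ltP => bx //; lra.
Qed.

Lemma clamp_nd a b : a <= b -> {homo clamp a b : x y / x <= y}.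
Proof.
move=> ab x y xy; rewrite /clamp.
case: (ltP x a) => xa; case: (ltP y a) => ya; try lra;
case: (ltP b x) => bx; case: (ltP b y) => by_; lra.
Qed.

Lemma clamp_lip a b x y : a <= b -> `|clamp a b x - clamp a b y| <= `|x - y|.
Proof.
move=> ab; have h1 := ler_norm (x - y); have h2 := ler_norm (y - x).
rewrite distrC in h2.
rewrite /clamp ler_norml.
case: (ltP x a) => xa; case: (ltP y a) => ya;
case: (ltP b x) => bx; case: (ltP b y) => by_; apply/andP; split; lra.
Qed.

Lemma lip_within_cont (a b K : R) (f : R -> R) : a <= b ->
  (forall x y, `[a, b]%classic x -> `[a, b]%classic y -> `|f x - f y| <= K * `|x - y|) ->
  {within `[a, b], continuous f}.
Proof.
move=> ab lip.
have cin x : `[a, b]%classic (clamp a b x).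
  by rewrite /= in_itv /=; exact: clamp_in.
have cont : continuous (f \o clamp a b).
  move=> x; apply/cvgrPdist_le => e e0.
  have K1 : 0 < `|K| + 1 by rewrite ltr_pwDr // normr_ge0.
  apply/nbhs_ballP; exists (e / (`|K| + 1)); first exact: divr_gt0.
  move=> y /= xy.
  apply: (le_trans (lip _ _ (cin x) (cin y))).
  apply: (le_trans (y := `|K| * `|clamp a b x - clamp a b y|)).
    by rewrite ler_wpM2r // ?normr_ge0 // ler_norm.
  apply: (le_trans (y := `|K| * `|x - y|)).
    by rewrite ler_wpM2l ?normr_ge0 // clamp_lip.
  have : `|x - y| <= e / (`|K| + 1) by exact: ltW.
  rewrite ler_pdivlMr // => h.
  apply: le_trans h; rewrite mulrDr mulr1 mulrC lerDl normr_ge0 //.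
apply: (@subspace_eq_continuous _ _ _ (f \o clamp a b)).
  move=> x; rewrite inE /= in_itv /= => xab.
  by rewrite /= clamp_id.
exact: continuous_subspaceT.
Qed.

Lemma nonincr_meas_on (a b : R) (f : R -> R) : a <= b ->
  {in `[a, b] &, {homo f : x y /~ x <= y}} -> measurable_fun `[a, b] f.
Proof.
move=> ab fni.
have cin x : clamp a b x \in `[a, b] by rewrite in_itv /= clamp_in.
apply: (@eq_measurable_fun _ _ _ _ _ (f \o clamp a b)).
  move=> x; rewrite inE /= in_itv /= => xab.
  by rewrite /= clamp_id.
apply: nonincreasing_measurable => // x y xy.
by apply: fni => //; apply: clamp_nd.
Qed.

Lemma bnd_integrable d (T : measurableType d) (mu : {measure set T -> \bar R})
  (D : set T) (f : T -> R) (M : R) : measurable D -> (mu D < +oo)%E ->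
  measurable_fun D f -> (forall x, D x -> `|f x| <= M) ->
  mu.-integrable D (EFin \o f).
Proof.
move=> mD Dfin mf bd; apply: measurable_bounded_integrable => //.
exists M; split; first exact: num_real.
move=> y My x Dx; apply: (le_trans (bd x Dx)); exact: ltW.
Qed.

Lemma deriv_meas (Lb : R) (f : R -> R) :
  (forall l, 0 <= l <= Lb -> derivable f l 1 /\ 0 <= derive1 f l <= 1) ->
  measurable_fun `[0, Lb]%classic (derive1 f).
Proof.
move=> hf; case: (leP 0 Lb) => Lb0; last first.
  by rewrite set_itv_ge ?bnd_simp -?ltNge //; exact: measurable_fun_set0.
have fnd : {in `[0, Lb] &, {homo f : x y / x <= y}}.
  apply: ger0_derive1_le_cc.
  - move=> x; rewrite in_itv /= => /andP[x0 xL]; have hx : 0 <= x <= Lb by rewrite !ltW. exact: (proj1 (hf x hx)).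
  - move=> x; rewrite in_itv /= => /andP[x0 xL]; have hx : 0 <= x <= Lb by rewrite !ltW. by case: (hf x hx) => _ /andP[].
  - apply: derivable_within_continuous => x; rewrite in_itv /= => xL.
    exact: (proj1 (hf x xL)).
pose fc := f \o clamp 0 Lb.
have cin x : clamp 0 Lb x \in `[0, Lb] by rewrite in_itv /= clamp_in.
have fcnd : {homo fc : x y / x <= y}.
  by move=> x y xy; apply: fnd => //; apply: clamp_nd.
rewrite -(@setUitv1 _ _ (BLeft 0) Lb true) ?bnd_simp //.
apply/measurable_funU => //; split; last exact: measurable_fun_set1.
pose hh : (R -> R)^nat := (fun n x => (harmonic n)^-1 * (fc (x + harmonic n) - fc x)).
refine (@measurable_fun_cvg _ _ _ _ hh _ _ _).
  move=> n; apply: measurable_funM; first exact: measurable_cst.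
  apply: measurable_funB; apply: nondecreasing_measurable => // x y xy.
    by apply: (fcnd (x + harmonic n) (y + harmonic n)); rewrite lerD2r.
move=> x /=; rewrite in_itv /= => /andP[x0 xL].
have dx : derivable f x 1 by apply: (proj1 (hf x _)); rewrite x0 ltW.
have := dx; rewrite /derivable => /cvgr_dnbhsP /(_ harmonic).
have hne : forall n, harmonic n != 0 :> R by move=> n; rewrite gt_eqF // harmonic_gt0.
move=> /(_ (conj hne cvg_harmonic)) hc.
rewrite derive1E; apply: cvg_trans hc; apply: near_eq_cvg.
have xL' : 0 < Lb - x by rewrite subr_gt0.
move: (@cvg_harmonic R) => /cvgr_dist_lt /(_ _ xL').
apply: filterS => n /= hn.
rewrite sub0r normrN ger0_norm ?harmonic_ge0 // in hn.
rewrite /hh /fc /=. rewrite !clamp_id; last 2 first.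
- by rewrite x0 ltW.
- rewrite addr_ge0 ?harmonic_ge0 //=; rewrite -lerBrDl ltW //.
by rewrite [_%:A]mulr1 [n.+1%:R^-1 + x]addrC.
Qed.

Lemma leb_fin (Lb : R) : (@lebesgue_measure R `[0%R, Lb]%classic < +oo)%E.
Proof. by rewrite lebesgue_measure_itv; case: ifP => _; rewrite ltry. Qed.

Lemma intL_int (Lb M : R) (f : R -> R) : measurable_fun `[0, Lb]%classic f ->
  (forall l, `[0, Lb]%classic l -> `|f l| <= M) ->
  (@lebesgue_measure R).-integrable `[0, Lb]%classic (EFin \o f).
Proof. move=> mf bd; apply: (@bnd_integrable _ _ _ _ _ M) => //; exact: leb_fin. Qed.

Lemma in01 (Lb : R) (f : R -> R) l : `[0, Lb]%classic l ->
  (forall l, 0 <= l <= Lb -> 0 <= f l <= 1) -> 0 <= f l <= 1.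
Proof. by rewrite /= in_itv /= => /[swap] h /h. Qed.

Lemma intL_1B (Lb : R) (a : R -> R) : measurable_fun `[0, Lb]%classic a ->
  (forall l, 0 <= l <= Lb -> 0 <= a l <= 1) ->
  intL Lb (fun l => 1 - a l) = intL Lb (fun _ => 1) - intL Lb a.
Proof.
move=> ma ha; rewrite /intL RintegralB //.
- apply: (@intL_int _ 1); [exact: measurable_cst| by move=> l _; rewrite normr1].
- apply: (@intL_int _ 1) => // l /in01 /(_ ha) /andP[h0 h1].
  by rewrite ger0_norm.
Qed.

Lemma intL_identity (Lb : R) (a b r : R -> R) :
  measurable_fun `[0, Lb]%classic a -> measurable_fun `[0, Lb]%classic b ->
  measurable_fun `[0, Lb]%classic r ->
  (forall l, 0 <= l <= Lb -> 0 <= a l <= 1) ->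
  (forall l, 0 <= l <= Lb -> 0 <= b l <= 1) ->
  (forall l, 0 <= l <= Lb -> 0 <= r l <= 1) ->
  intL Lb (fun l => (1 - b l) * r l) + intL Lb (fun l => (1 - a l) * (1 - r l)) =
  intL Lb (fun _ => 1) - intL Lb a + intL Lb (fun l => (a l - b l) * r l).
Proof.
move=> ma mb mr ha hb hr.
have m1 : measurable_fun `[0, Lb]%classic (fun _ : R => 1 : R) by exact: measurable_cst.
have i1 : forall f : R -> R, measurable_fun `[0, Lb]%classic f ->
   (forall l, `[0, Lb]%classic l -> -2 <= f l <= 2) ->
   (@lebesgue_measure R).-integrable `[0, Lb]%classic (EFin \o f).
  move=> f mf bf; apply: (@intL_int _ 2) => // l /bf; by rewrite ler_norml.
rewrite /intL -RintegralD //; last 2 first.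
- apply: i1.
    apply: measurable_funM => //; apply: measurable_funB => //.
  move=> l /in01 => H; case/andP: (H _ hb) => ? ?; case/andP: (H _ hr) => ? ?.
  apply/andP; split; nra.
- apply: i1.
    by apply: measurable_funM => //; apply: measurable_funB.
  move=> l /in01 => H; case/andP: (H _ ha) => ? ?; case/andP: (H _ hr) => ? ?.
  apply/andP; split; nra.
rewrite -RintegralB //; last 2 first.
- by apply: i1 => // l _; apply/andP; split; lra.
- by apply: i1 => // l /in01 => H; case/andP: (H _ ha) => ? ?; apply/andP; split; lra.
rewrite -RintegralD //; last 2 first.
- apply: i1; first by apply: measurable_funB.
  by move=> l /in01 => H; case/andP: (H _ ha) => ? ?; apply/andP; split; lra.
- apply: i1.
    by apply: measurable_funM => //; apply: measurable_funB.
  move=> l /in01 => H; case/andP: (H _ ha) => ? ?; case/andP: (H _ hb) => ? ?;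
  case/andP: (H _ hr) => ? ?.
  apply/andP; split; nra.
by apply: eq_Rintegral => l _; ring.
Qed.

Lemma bnd_prod (a b r : R) : 0 <= a <= 1 -> 0 <= b <= 1 -> 0 <= r <= 1 ->
  `|(a - b) * r| <= 1.
Proof. move=> /andP[? ?] /andP[? ?] /andP[? ?]; rewrite ler_norml; apply/andP; split; nra. Qed.

Lemma le1_prod (a b r : R) : 0 <= a <= 1 -> 0 <= b <= 1 -> 0 <= r <= 1 ->
  (a - b) * r <= 1.
Proof. move=> /andP[? ?] /andP[? ?] /andP[? ?]; nra. Qed.

Lemma ge0_prod (a b r : R) : b <= a -> 0 <= r -> 0 <= (a - b) * r.
Proof. move=> ? ?; apply: mulr_ge0 => //; lra. Qed.

Lemma arith1 (v u c j : R) : v + u + c + j - v - u - c = j.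
Proof. ring. Qed.

Lemma ge0_prod2 (a r : R) : a <= 1 -> r <= 1 -> 0 <= (1 - a) * (1 - r).
Proof. by move=> ? ?; apply: mulr_ge0; rewrite subr_ge0. Qed.

Lemma le1_prod2 (a r : R) : 0 <= a <= 1 -> 0 <= r <= 1 -> (1 - a) * (1 - r) <= 1.
Proof. move=> /andP[? ?] /andP[? ?]; nra. Qed.

End Helpers.

Theorem lemma2
  (R : realType) (d : measure_display) (T : measurableType d)
  (P : probability T R) (L : R -> T -> R)
  (tl th Lb : R) (mu eta : probability R R) (q : R -> R)
  (g : R -> R -> R) (gIn : R -> R) (alpha : R)
  (Rs : R -> R -> R) (ps : R -> R) :
  let F := Fdist P L in
  let Th := Theta tl th in
  (* losses: bounded measurable with values in [0, Lb], continuous d.f. *)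
  (forall theta, Th theta -> measurable_fun setT (L theta)) ->
  (forall theta w, Th theta -> 0 <= L theta w <= Lb) ->
  (forall theta, Th theta -> continuous (F theta)) ->
  (* mu: probability measure on Theta with Lebesgue density q *)
  (mu Th = 1%E) ->
  measurable_fun setT q -> (forall x, 0 <= q x) ->
  (forall A, measurable A ->
     mu A = (\int[@lebesgue_measure R]_(x in A) (q x)%:E)%E) ->
  (* distortions *)
  (forall theta, Th theta -> distortion (g theta)) -> distortion gIn ->
  (* (A1) *)
  (forall theta t, Th theta -> 0 <= t <= 1 -> g theta t <= gIn t) ->
  (* (A2) *)
  (forall l theta, tl < theta < th -> derivable (fun s => F s l) theta 1) ->
  (exists K : R, forall l theta theta', Th theta -> Th theta' ->
     `|F theta l - F theta' l| <= K * `|theta - theta'|) ->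
  (forall l theta, tl < theta < th -> derive1 (fun s => F s l) theta <= 0) ->
  (* (A3) *)
  (exists delta : R, forall theta t, Th theta -> 0 <= t <= 1 ->
     derivable (g theta) t 1 /\ derive1 (g theta) t <= delta) ->
  (forall t theta, 0 <= t <= 1 -> tl < theta < th ->
     derivable (fun s => g s t) theta 1) ->
  (exists K : R, forall t theta theta', 0 <= t <= 1 -> Th theta -> Th theta' ->
     `|g theta t - g theta' t| <= K * `|theta - theta'|) ->
  (forall t theta, 0 < t < 1 -> tl < theta < th ->
     derive1 (fun s => g s t) theta <= 0) ->
  (* eta: probability measure on Theta equivalent to mu *)
  (eta Th = 1%E) ->
  (forall A, measurable A -> A `<=` Th -> (mu A = 0%E <-> eta A = 0%E)) ->
  0 < alpha <= 1 ->
  (* the menu (Rs, ps) is incentive efficient and optimal for (W) *)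
  incentive_efficient tl th Lb mu g gIn F Rs ps ->
  optimal_W tl th Lb mu g gIn F eta alpha Rs ps ->
  (* premium formula *)
  (forall theta, Th theta ->
     ps theta =
       intL Lb (fun l => 1 - g tl (F tl l))
       - Rintegral (@lebesgue_measure R) `[tl, theta]
           (fun s => intL Lb (fun l =>
              (derive1 (fun s' => g s' (F s l)) s
               + derive1 (g s) (F s l) * derive1 (fun s' => F s' l) s)
              * derive1 (Rs s) l))
       - intL Lb (fun l => (1 - g theta (F theta l)) * derive1 (Rs theta) l)) ->
  (* (1) *)
  ((forall theta l, Th theta -> 0 <= l <= Lb -> derive1 (Rs theta) l = 0) ->
     (\int[mu]_(theta in Th) (intL Lb (fun l => gIn (F theta l)))%:E
        >= (intL Lb (fun l => g tl (F tl l)))%:E)%E) /\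
  (* (2) *)
  ((forall theta l, Th theta -> 0 <= l <= Lb -> derive1 (Rs theta) l = 1) ->
     forall theta, Th theta -> Vins Lb gIn F theta (Rs theta) (ps theta) = 0) /\
  (* (3) *)
  ((forall theta l, Th theta -> 0 <= l <= Lb -> 0 < derive1 (Rs theta) l < 1) ->
     (\int[mu]_(theta in Th) (intL Lb (fun l => gIn (F theta l)))%:E
        >= (intL Lb (fun l => g tl (F tl l)))%:E
           + \int[mu]_(theta in Th) (Uag Lb g F theta (Rs theta) (ps theta))%:E
           - (Uag Lb g F tl (Rs tl) (ps tl))%:E
           + \int[mu]_(theta in Th)
               (intL Lb (fun l => (gIn (F theta l) - g theta (F theta l))
                                  * derive1 (Rs theta) l))%:E)%E) /\
  (* moreover *)
  ((forall theta, Th theta -> ps theta = 0 /\ (forall l, 0 <= l <= Lb -> Rs theta l = 0)) ->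
     {ae mu, forall theta, Th theta ->
        {ae @lebesgue_measure R, forall l, `[0, Lb]%classic l -> gIn (F theta l) = 1}}).
Proof.
move=> F Th hLm hLb hFc hmuTh hqm hq0 hmuq hg hgIn hA1 hdF hFlip hdF0 hdel hdg
  hglip hdg0 hetaTh heq halpha hIE hopt hprem.
case: hIE => [[[hret [hUint hVint]] [[hIRp hIRV] hIC]] _].
have tlth : tl <= th.
  rewrite leNgt; apply/negP => thtl; move: hmuTh.
  rewrite /Th /Theta set_itv_ge ?bnd_simp -?ltNge // measure0.
  by move/esym/eqP; rewrite onee_eq0.
have Thtl : Th tl by rewrite /Th /Theta /= in_itv /= lexx tlth.
have mTh : measurable Th by exact: measurable_itv.
have muThf : (mu Th < +oo)%E by rewrite hmuTh ltry.
have mL0 : measurable (`[0, Lb]%classic : set R) by exact: measurable_itv.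
have inL l : l \in (`[0, Lb]%classic : set R) -> 0 <= l <= Lb.
  by rewrite inE /= in_itv.
have inL' l : (`[0, Lb]%classic : set R) l -> 0 <= l <= Lb.
  by rewrite /= in_itv.
have inTh x : x \in Th -> Th x by rewrite inE.
have intL0 : intL Lb (fun _ => 0) = 0 by rewrite /intL Rintegral_cst // mul0r.
have mA : forall t l, Th t -> measurable [set w | L t w <= l].
  move=> t l Tt; have := hLm t Tt measurableT _ (@measurable_itv R `]-oo, l]%R).
  rewrite setTI; congr measurable; apply/seteqP; split => w /=; by rewrite in_itv.
have Fb : forall t l, Th t -> 0 <= F t l <= 1.
  move=> t l Tt; rewrite /F /Fdist.
  apply/andP; split; first by apply: fine_ge0; apply: measure_ge0.
  rewrite -lee_fin fineK; first exact: probability_le1 (mA t l Tt).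
  exact: fin_num_measure (mA t l Tt).
have Fnd : forall t, Th t -> {homo F t : x y / x <= y}.
  move=> t Tt x y xy; rewrite /F /Fdist.
  have : (P [set w | (L t w <= x)%R] <= P [set w | (L t w <= y)%R])%E.
    apply: le_measure; rewrite ?inE; try exact: mA.
    by move=> w /= h; apply: le_trans h xy.
  by move=> h; rewrite -lee_fin !fineK //; apply: fin_num_measure; exact: mA.
have intE : forall f : R -> R, mu.-integrable Th (EFin \o f) ->
    (\int[mu]_(t in Th) (f t)%:E = (Rintegral mu Th f)%:E)%E.
  by move=> f hf; rewrite /Rintegral fineK //; exact: integrable_fin_num.
have iD : forall f1 f2 : R -> R, mu.-integrable Th (EFin \o f1) ->
    mu.-integrable Th (EFin \o f2) ->
    mu.-integrable Th (EFin \o (fun t => f1 t + f2 t)).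
  move=> f1 f2 i1 i2; have := integrableD mTh i1 i2.
  by congr (_.-integrable _ _); apply/funext => t /=; rewrite EFinD.
have icst : forall c : R, mu.-integrable Th (EFin \o (fun=> c)).
  by move=> c; apply: finite_measure_integrable_cst.
have fmu : fine (mu Th) = 1.
  by rewrite (_ : mu Th = 1%E).
have RD : forall f1 f2 : R -> R, mu.-integrable Th (EFin \o f1) ->
    mu.-integrable Th (EFin \o f2) ->
    Rintegral mu Th (fun t => f1 t + f2 t) = Rintegral mu Th f1 + Rintegral mu Th f2.
  by move=> f1 f2 i1 i2; rewrite RintegralD.
have Rc : forall c : R, Rintegral mu Th (fun=> c) = c.
  by move=> c; rewrite Rintegral_cst // fmu mulr1.
have Vge0 : 0 <= Rintegral mu Th (fun t => Vins Lb gIn F t (Rs t) (ps t)).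
  by move: hIRV; rewrite intE // lee_fin.
have mcomp : forall h : R -> R, distortion h -> forall t, Th t ->
    measurable_fun `[0, Lb]%classic (fun l => h (F t l)) /\
    (forall l, 0 <= l <= Lb -> 0 <= h (F t l) <= 1).
  move=> h [_ [_ [hr hm]]] t Tt; split.
    apply: nondecreasing_measurable => // x y xy.
    case/andP: (Fb t x Tt) => ? ?; case/andP: (Fb t y Tt) => ? ?.
    by apply: hm => //; apply: Fnd.
  by move=> l _; apply: hr; apply: Fb.
have gr : forall t, Th t ->
    measurable_fun `[0, Lb]%classic (derive1 (Rs t)) /\
    (forall l, 0 <= l <= Lb -> 0 <= derive1 (Rs t) l <= 1).
  move=> t Tt; case: (hret t Tt) => _ [_ hr]; split.
    exact: deriv_meas.
  by move=> l /hr [].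
split.
  move=> h0.
  have ps_eq : forall t, Th t -> ps t = intL Lb (fun l => 1 - g tl (F tl l)).
    move=> t Tt; rewrite hprem //.
    rewrite (_ : intL Lb (fun l => (1 - g t (F t l)) * derive1 (Rs t) l) = 0); last first.
      by rewrite -intL0; apply: eq_Rintegral => l /inL hl; rewrite h0 // mulr0.
    rewrite (_ : Rintegral _ _ _ = 0); first by rewrite !subr0.
    rewrite -(mul0r (fine (@lebesgue_measure R `[tl, t]%classic))) -Rintegral_cst //.
    apply: eq_Rintegral.
    move=> s; rewrite inE /= in_itv /= => /andP[s1 s2].
    rewrite -intL0; apply: eq_Rintegral => l /inL hl; rewrite h0 ?mulr0 //.
    move: Tt; rewrite /Th /Theta /= !in_itv /= => /andP[_ t2].
    by rewrite s1 (le_trans s2 t2).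
  have Veq : forall t, Th t -> intL Lb (fun l => gIn (F t l)) =
      Vins Lb gIn F t (Rs t) (ps t) + intL Lb (fun l => g tl (F tl l)).
    move=> t Tt; rewrite /Vins ps_eq //.
    rewrite (_ : intL Lb (fun l => (1 - gIn (F t l)) * (1 - derive1 (Rs t) l)) =
                 intL Lb (fun l => 1 - gIn (F t l))); last first.
      by apply: eq_Rintegral => l /inL hl; rewrite h0 // subr0 mulr1.
    case: (mcomp _ hgIn t Tt) => ma ha; case: (mcomp _ (hg tl Thtl) tl Thtl) => mb hb.
    rewrite !intL_1B //; lra.
  rewrite (eq_integral (fun t => (Vins Lb gIn F t (Rs t) (ps t) +
       intL Lb (fun l => g tl (F tl l)))%:E)); last first.
    by move=> t /inTh Tt; rewrite Veq.
  rewrite intE; last exact: iD.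
  rewrite lee_fin RD // Rc; lra.
split.
  move=> h1.
  have X : forall t t', Th t -> Th t' ->
      intL Lb (fun l => (1 - g t (F t l)) * derive1 (Rs t') l) =
      intL Lb (fun l => 1 - g t (F t l)).
    move=> t t' Tt Tt'; apply: eq_Rintegral => l /inL hl.
    by rewrite h1 // mulr1.
  have Vp : forall t, Th t -> Vins Lb gIn F t (Rs t) (ps t) = ps t.
    move=> t Tt; rewrite /Vins -[RHS]subr0 -intL0; congr (_ - _).
    by apply: eq_Rintegral => l /inL hl; rewrite h1 // subrr mulr0.
  have pc : forall t t', Th t -> Th t' -> ps t <= ps t'.
    move=> t t' Tt Tt'; have := hIC t t' Tt Tt'; rewrite /Uag !X //; lra.
  have p0 : forall t, Th t -> ps t <= 0.
    move=> t Tt; have := hIRp t Tt; rewrite /Uag /Unone X //; lra.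
  have Vi : (\int[mu]_(t in Th) (Vins Lb gIn F t (Rs t) (ps t))%:E = (ps tl)%:E)%E.
    rewrite (eq_integral (fun _ => (ps tl)%:E)); last first.
      move=> t /inTh Tt; rewrite Vp //; congr EFin; apply/le_anti.
      by rewrite !pc.
    by rewrite integral_cst // [X in (_ * X)%E](_ : _ = 1%E) ?mule1.
  move: hIRV; rewrite Vi lee_fin => ptl t Tt.
  rewrite Vp //; apply/le_anti; rewrite p0 //=.
  by apply: le_trans ptl (pc _ _ Thtl Tt).
split.
  move=> _.
  have Fni : forall l t1 t2, Th t1 -> Th t2 -> t1 <= t2 -> F t2 l <= F t1 l.
    move=> l t1 t2 T1 T2 t12.
    have hc : {within `[tl, th], continuous (fun s => F s l)}.
      case: hFlip => K hK; apply: (@lip_within_cont _ tl th K) => // x y Tx Ty.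
      exact: hK.
    have df : forall x, x \in `]tl, th[ -> derivable (fun s => F s l) x 1.
      by move=> x; rewrite in_itv /= => hx; apply: hdF.
    have dfle : forall x, x \in `]tl, th[ -> derive1 (fun s => F s l) x <= 0.
      by move=> x; rewrite in_itv /= => hx; apply: hdF0.
    by apply: (ler0_derive1_le_cc df dfle hc).
  have Iint : forall t, Th t ->
     (@lebesgue_measure R).-integrable `[0, Lb]%classic
        (EFin \o (fun l => gIn (F t l))).
    move=> t Tt; case: (mcomp _ hgIn t Tt) => ma ha.
    apply: (@intL_int _ _ 1) => // l /inL' /ha /andP[h1 h2]; by rewrite ger0_norm.
  have Imeas : measurable_fun Th (fun t => intL Lb (fun l => gIn (F t l))).
    apply: nonincr_meas_on => // t1 t2 T1 T2 t12.
    apply: le_Rintegral => //; try exact: Iint.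
    move=> l /= /[!in_itv] /= hl.
    case: hgIn => _ [_ [_ hm]].
    case/andP: (Fb t1 l T1) => ? ?; case/andP: (Fb t2 l T2) => ? ?.
    by apply: hm => //; apply: Fni.
  have Uid : forall t, Th t ->
      intL Lb (fun l => gIn (F t l)) =
      Vins Lb gIn F t (Rs t) (ps t) + Uag Lb g F t (Rs t) (ps t) +
      intL Lb (fun _ => 1) +
      intL Lb (fun l => (gIn (F t l) - g t (F t l)) * derive1 (Rs t) l).
    move=> t Tt; rewrite /Vins /Uag.
    case: (mcomp _ hgIn t Tt) => ma ha; case: (mcomp _ (hg t Tt) t Tt) => mb hb.
    case: (gr t Tt) => mr hr.
    have := @intL_identity R Lb _ _ _ ma mb mr ha hb hr; lra.
  have Utl : Uag Lb g F tl (Rs tl) (ps tl) =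
      intL Lb (fun l => g tl (F tl l)) - intL Lb (fun _ => 1).
    rewrite /Uag hprem // set_itv1 Rintegral_set1.
    case: (mcomp _ (hg tl Thtl) tl Thtl) => mb hb.
    rewrite intL_1B //; lra.
  have Vm : measurable_fun Th (fun t => Vins Lb gIn F t (Rs t) (ps t)).
    by apply/measurable_EFinP; exact: (measurable_int _ hVint).
  have Um : measurable_fun Th (fun t => Uag Lb g F t (Rs t) (ps t)).
    by apply/measurable_EFinP; exact: (measurable_int _ hUint).
  have Jint : mu.-integrable Th (EFin \o (fun t =>
      intL Lb (fun l => (gIn (F t l) - g t (F t l)) * derive1 (Rs t) l))).
    apply: (@bnd_integrable _ _ _ _ _ _ (intL Lb (fun _ => 1))) => //.
      apply: (@eq_measurable_fun _ _ _ _ _ (fun t =>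
        intL Lb (fun l => gIn (F t l)) - Vins Lb gIn F t (Rs t) (ps t)
        - Uag Lb g F t (Rs t) (ps t) - intL Lb (fun _ => 1))).
        by move=> t /inTh Tt; rewrite /= Uid // arith1.
      apply: measurable_funB; last exact: measurable_cst.
      by apply: measurable_funB => //; apply: measurable_funB.
    move=> t Tt.
    case: (mcomp _ hgIn t Tt) => ma ha; case: (mcomp _ (hg t Tt) t Tt) => mb hb.
    case: (gr t Tt) => mr hr.
    have i1 : (@lebesgue_measure R).-integrable `[0, Lb]%classic
        (EFin \o (fun l => (gIn (F t l) - g t (F t l)) * derive1 (Rs t) l)).
      apply: (@intL_int _ _ 1).
        by apply: measurable_funM => //; apply: measurable_funB.
      by move=> l /inL' hl; apply: bnd_prod; [apply: ha | apply: hb | apply: hr].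
    rewrite ger0_norm.
      apply: le_Rintegral => //.
        apply: (@intL_int _ _ 1); [exact: measurable_cst | by move=> l _; rewrite normr1].
      by move=> l /= /[!in_itv] /= hl; apply: le1_prod; [apply: ha | apply: hb | apply: hr].
    apply: Rintegral_ge0 => l /= /[!in_itv] /= hl.
    have := hA1 t (F t l) Tt (Fb t l Tt).
    by case/andP: (hr l hl) => ? ? ?; apply: ge0_prod.
  rewrite [X in (_ <= X)%E](eq_integral (fun t => (Vins Lb gIn F t (Rs t) (ps t) +
      Uag Lb g F t (Rs t) (ps t) + intL Lb (fun _ => 1) +
      intL Lb (fun l => (gIn (F t l) - g t (F t l)) * derive1 (Rs t) l))%:E)); last first.
    by move=> t /inTh Tt; rewrite Uid.
  have iD4 : forall f1 f2 f3 f4 : R -> R, mu.-integrable Th (EFin \o f1) ->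
      mu.-integrable Th (EFin \o f2) -> mu.-integrable Th (EFin \o f3) ->
      mu.-integrable Th (EFin \o f4) ->
      mu.-integrable Th (EFin \o (fun t => f1 t + f2 t + f3 t + f4 t)).
    move=> f1 f2 f3 f4 i1 i2 i3 i4.
    apply: (iD (fun t => f1 t + f2 t + f3 t) f4) => //.
    apply: (iD (fun t => f1 t + f2 t) f3) => //.
    exact: (iD f1 f2).
  have RD4 : forall f1 f2 f3 f4 : R -> R, mu.-integrable Th (EFin \o f1) ->
      mu.-integrable Th (EFin \o f2) -> mu.-integrable Th (EFin \o f3) ->
      mu.-integrable Th (EFin \o f4) ->
      Rintegral mu Th (fun t => f1 t + f2 t + f3 t + f4 t) =
      Rintegral mu Th f1 + Rintegral mu Th f2 + Rintegral mu Th f3 +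
      Rintegral mu Th f4.
    move=> f1 f2 f3 f4 i1 i2 i3 i4.
    rewrite (RD (fun t => f1 t + f2 t + f3 t) f4) //; last first.
      apply: (iD (fun t => f1 t + f2 t) f3) => //; exact: (iD f1 f2).
    rewrite (RD (fun t => f1 t + f2 t) f3) //; last exact: (iD f1 f2).
    by rewrite (RD f1 f2).
  have i4 := iD4 (fun t => Vins Lb gIn F t (Rs t) (ps t))
     (fun t => Uag Lb g F t (Rs t) (ps t)) (fun=> intL Lb (fun _ => 1))
     (fun t => intL Lb (fun l => (gIn (F t l) - g t (F t l)) * derive1 (Rs t) l))
     hVint hUint (icst _) Jint.
  rewrite (intE _ i4).
  rewrite (intE _ hUint) (intE _ Jint) Utl.
  rewrite -EFinD lee_fin.
  rewrite (RD4 _ _ _ _ hVint hUint (icst _) Jint).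
  rewrite Rc; lra.
move=> h4.
pose hh t l := (1 - gIn (F t l)) * (1 - derive1 (Rs t) l).
have hge0 : forall t l, Th t -> 0 <= l <= Lb -> 0 <= hh t l.
  move=> t l Tt hl; case: (mcomp _ hgIn t Tt) => _ ha; case: (gr t Tt) => _ hr.
  case/andP: (ha l hl) => _ ?; case/andP: (hr l hl) => _ ?.
  exact: ge0_prod2.
have hm : forall t, Th t -> measurable_fun `[0, Lb]%classic (hh t).
  move=> t Tt; case: (mcomp _ hgIn t Tt) => ma _; case: (gr t Tt) => mr _.
  apply: measurable_funM; apply: measurable_funB => //; exact: measurable_cst.
have hint : forall t, Th t ->
    (@lebesgue_measure R).-integrable `[0, Lb]%classic (EFin \o hh t).
  move=> t Tt; apply: (@intL_int _ _ 1); first exact: hm.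
  move=> l /inL' hl; case: (mcomp _ hgIn t Tt) => _ ha; case: (gr t Tt) => _ hr.
  by rewrite ger0_norm ?hge0 //; apply: le1_prod2; [apply: ha | apply: hr].
have Veq : forall t, Th t -> Vins Lb gIn F t (Rs t) (ps t) = - intL Lb (hh t).
  by move=> t Tt; rewrite /Vins (proj1 (h4 t Tt)) sub0r.
have Vm : measurable_fun Th (fun t => (Vins Lb gIn F t (Rs t) (ps t))%:E).
  exact: (measurable_int _ hVint).
have Vae := proj1 (ae_eq_integral_abs mu mTh Vm).
have Wint : mu.-integrable Th (EFin \o (fun t => intL Lb (hh t))).
  apply: (eq_integrable mTh _ _ _ (integrableN hVint)).
  by move=> t /inTh Tt; rewrite /= Veq // opprK.
have : (\int[mu]_(t in Th) `|(Vins Lb gIn F t (Rs t) (ps t))%:E| = 0)%E.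
  rewrite (eq_integral (fun t => (intL Lb (hh t))%:E)); last first.
    move=> t /inTh Tt; rewrite Veq // abse_EFin normrN ger0_norm //.
    by apply: Rintegral_ge0 => l /inL' hl; apply: hge0.
  rewrite intE //; congr EFin; apply/le_anti/andP; split; last first.
    by apply: Rintegral_ge0 => t Tt; apply: Rintegral_ge0 => l /inL' hl; apply: hge0.
  have : Rintegral mu Th (fun t => intL Lb (hh t)) =
         - Rintegral mu Th (fun t => Vins Lb gIn F t (Rs t) (ps t)).
    apply/eqP; rewrite -subr_eq0 opprK -RD //.
    rewrite -(Rc 0); apply/eqP/eq_Rintegral => t /inTh Tt.
    by rewrite Veq // addrN.
  by move=> ->; rewrite oppr_le0.
move=> /Vae {}Vae.
apply: filterS Vae => t hV Tt.
have V0 : intL Lb (hh t) = 0.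
  by have := hV Tt; rewrite Veq // => -[] /eqP; rewrite oppr_eq0 => /eqP.
have hae := proj1 (ae_eq_integral_abs (@lebesgue_measure R) mL0
   (proj2 (measurable_EFinP _ _) (hm t Tt))).
have : (\int[@lebesgue_measure R]_(l in `[0%R, Lb]%classic) `|(hh t l)%:E| = 0)%E.
  under eq_integral => l /inL hl do rewrite gee0_abs ?lee_fin ?hge0 //.
  move: V0; rewrite /intL /Rintegral => V0.
  rewrite -[LHS]fineK ?V0 //; apply: integrable_fin_num => //; exact: hint.
move=> /hae {}hae.
have hend : \forall l \ae (@lebesgue_measure R), l != 0 /\ l != Lb.
  exists ([set (0:R)] `|` [set Lb]); split.
  - by apply: measurableU.
  - by rewrite measureU0 //; apply: lebesgue_measure_set1.
  - move=> l /= hnot; case: (eqVneq l 0) => [->|l0]; first by left.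
    case: (eqVneq l Lb) => [->|lL]; first by right.
    by exfalso; apply: hnot.
apply: filterS2 hae hend => l h1 [l0 lL] hl.
have lin : l \in `]0, Lb[.
  move: hl; rewrite /= !in_itv /= => /andP[a b].
  by rewrite !lt_neqAle a b eq_sym l0 lL.
have r0 : derive1 (Rs t) l = 0.
  rewrite derive1E (@near_eq_derive _ _ _ (Rs t) (cst 0) l 1) ?derive_cst //.
  apply: filterS (near_in_itvoo lin) => x; rewrite in_itv /= => /andP[x0 xL].
  by apply: (proj2 (h4 t Tt)); rewrite !ltW.
move: (h1 hl) => /= -[]; rewrite /hh r0 subr0 mulr1 => /eqP.
by rewrite subr_eq0 => /eqP <-.

Qed.
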